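(* There is an absolute constant $\beta>0$ such that for every integer $k>5$ there exists a $k$-terminal network $(G,c)$ with $G$ planar such that every mimicking network $(G',c')$ of $(G,c)$ satisfies $|E(G')|\ge \beta k^2$.
   Context: A network $(G,c)$ is an undirected graph $G$ with edge costs $c:E(G)\to\mathbb{R}^+$. A $k$-terminal network additionally has a set $Q=\{q_1,\dots,q_k\}\subseteq V(G)$ of distinguished vertices called terminals. For $S\subset Q$ with $S\neq\emptyset,Q$, write $\bar S=Q\setminus S$; a cut $(W,V(G)\setminus W)$ is $S$-separating if $W\cap Q\in\{S,\bar S\}$. The cost of a cut is the total cost of the edges with exactly one endpoint in $W$ (the cutset). $\mathrm{mincut}_{G,c}(S,\bar S)$ denotes the minimum cost of an $S$-separating cut. A mimicking network of a $k$-terminal network $(G,c)$ is a $k$-terminal network $(G',c')$ with the same terminal set $Q$ such that $\mathrm{mincut}_{G',c'}(S,\bar S)=\mathrm{mincut}_{G,c}(S,\bar S)$ for every $S\subset Q$ with $S\neq\emptyset,Q$. *)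

(* Defs.v *)
From Stdlib Require Import Reals List.
Import ListNotations.
Open Scope R_scope.

(* A network: vertices are 0 .. nverts-1, an undirected simple edge list
   (each edge stored once as an ordered pair), and a cost function on edges. *)
Record network := mkNet {
  nverts : nat;
  edges : list (nat * nat);
  cost : nat * nat -> R
}.

Definition unord (e : nat * nat) : nat * nat :=
  (Nat.min (fst e) (snd e), Nat.max (fst e) (snd e)).

Definition edge_ok (N : network) (e : nat * nat) : Prop :=
  (fst e < nverts N)%nat /\ (snd e < nverts N)%nat /\ fst e <> snd e
  /\ 0 < cost N e.

Definition wf_network (N : network) : Prop :=
  Forall (edge_ok N) (edges N) /\ NoDup (map unord (edges N)).

Definition terminals_ok (N : network) (Q : list nat) (k : nat) : Prop :=
  length Q = k /\ NoDup Q /\ Forall (fun q => (q < nverts N)%nat) Q.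

(* S subset of Q given by indicator on indices 0..k-1; S <> empty, S <> Q *)
Definition proper_subset (k : nat) (S : nat -> bool) : Prop :=
  (exists i, (i < k)%nat /\ S i = true) /\ (exists j, (j < k)%nat /\ S j = false).

Definition separating (Q : list nat) (S : nat -> bool) (W : nat -> bool) : Prop :=
  (forall i, (i < length Q)%nat -> W (nth i Q 0%nat) = S i) \/
  (forall i, (i < length Q)%nat -> W (nth i Q 0%nat) = negb (S i)).

Definition cut_cost (N : network) (W : nat -> bool) : R :=
  fold_right Rplus 0
    (map (fun e => if Bool.eqb (W (fst e)) (W (snd e)) then 0 else cost N e)
         (edges N)).

Definition is_mincut (N : network) (Q : list nat) (S : nat -> bool) (m : R) : Prop :=
  (exists W, separating Q S W /\ cut_cost N W = m) /\
  (forall W, separating Q S W -> m <= cut_cost N W).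

Definition mimicking (N' N : network) (Q : list nat) : Prop :=
  wf_network N' /\ terminals_ok N' Q (length Q) /\
  forall S, proper_subset (length Q) S ->
    forall m, is_mincut N Q S m <-> is_mincut N' Q S m.

(* Planarity: an embedding in R^2 with vertices as distinct points and edges
   as Jordan arcs (continuous injective images of [0,1]) joining their
   endpoints, whose interiors avoid all vertices and which meet only at
   endpoints. *)
Definition cont_on01 (g : R -> R * R) : Prop :=
  forall t, 0 <= t <= 1 -> forall eps, 0 < eps -> exists delta, 0 < delta /\
    forall s, 0 <= s <= 1 -> Rabs (s - t) < delta ->
      Rabs (fst (g s) - fst (g t)) < eps /\ Rabs (snd (g s) - snd (g t)) < eps.

Definition inj_on01 (g : R -> R * R) : Prop :=
  forall s t, 0 <= s <= 1 -> 0 <= t <= 1 -> g s = g t -> s = t.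

Definition planar (N : network) : Prop :=
  exists (p : nat -> R * R) (gamma : nat -> R -> R * R),
    (forall u v, (u < nverts N)%nat -> (v < nverts N)%nat -> p u = p v -> u = v) /\
    (forall i, (i < length (edges N))%nat ->
       let e := nth i (edges N) (0%nat, 0%nat) in
       cont_on01 (gamma i) /\ inj_on01 (gamma i) /\
       gamma i 0 = p (fst e) /\ gamma i 1 = p (snd e) /\
       (forall t w, 0 < t < 1 -> (w < nverts N)%nat -> gamma i t <> p w)) /\
    (forall i j s t, (i < length (edges N))%nat -> (j < length (edges N))%nat ->
       i <> j -> 0 <= s <= 1 -> 0 <= t <= 1 -> gamma i s = gamma j t ->
       (s = 0 \/ s = 1) /\ (t = 0 \/ t = 1)).

(* Main.v *)
Require Import Defs.
From Stdlib Require Import Reals List Lia Lra ZArith Arith Znumtheory Classical ClassicalEpsilon.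
Import ListNotations.
Open Scope R_scope.

Module A.
Import ListNotations.
Open Scope R_scope.

Fixpoint rs (n : nat) (f : nat -> R) : R :=
  match n with O => 0 | S n' => rs n' f + f n' end.

Lemma rs_ext n f g : (forall t, (t < n)%nat -> f t = g t) -> rs n f = rs n g.
Proof.
  induction n; simpl; intros H; auto.
  rewrite IHn by (intros; apply H; lia). rewrite H by lia. reflexivity.
Qed.

Lemma rs_plus n f g : rs n (fun t => f t + g t) = rs n f + rs n g.
Proof. induction n; simpl; [lra|]. rewrite IHn. lra. Qed.

Lemma rs_scal n c f : rs n (fun t => c * f t) = c * rs n f.
Proof. induction n; simpl; [lra|]. rewrite IHn. lra. Qed.

Lemma rs_zero n f : (forall t, (t < n)%nat -> f t = 0) -> rs n f = 0.
Proof.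
  intros H. rewrite (rs_ext n f (fun _ => 0)) by auto.
  clear H. induction n; simpl; [lra|]. rewrite IHn. lra.
Qed.

Definition skp (t0 s : nat) : nat := if Nat.ltb s t0 then s else S s.

Lemma rs_skip d g t0 : (t0 <= d)%nat ->
  rs (S d) g = g t0 + rs d (fun s => g (skp t0 s)).
Proof.
  induction d; intros H.
  - assert (t0 = 0%nat) by lia. subst. simpl. lra.
  - destruct (Nat.eq_dec t0 (S d)).
    + subst. change (rs (S (S d)) g) with (rs (S d) g + g (S d)).
      rewrite (rs_ext (S d) (fun s => g (skp (S d) s)) g).
      * lra.
      * intros t Ht. unfold skp. destruct (Nat.ltb_spec t (S d)); [reflexivity|lia].
    + change (rs (S (S d)) g) with (rs (S d) g + g (S d)).
      rewrite IHd by lia. simpl.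
      replace (skp t0 d) with (S d); [lra|].
      unfold skp. destruct (Nat.ltb_spec d t0); [lia|]. reflexivity.
Qed.

Lemma classic_dec_all d (A : nat -> nat -> Z) m :
  (forall t, (t < d)%nat -> A t m = 0%Z) \/ (exists t0, (t0 < d)%nat /\ A t0 m <> 0%Z).
Proof.
  induction d.
  - left; intros; lia.
  - destruct IHd as [H|[t0 [H1 H2]]].
    + destruct (Z.eq_dec (A d m) 0).
      * left. intros t Ht. destruct (Nat.eq_dec t d); [subst; auto|apply H; lia].
      * right. exists d. split; [lia|auto].
    + right. exists t0. split; [lia|auto].
Qed.

Lemma LA : forall m (c : nat -> R) d (u : nat -> R) (A : nat -> nat -> Z),
  (forall t, (t < d)%nat -> u t = rs m (fun e => IZR (A t e) * c e)) ->
  (forall lam : nat -> Z, rs d (fun t => IZR (lam t) * u t) = 0 ->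
      forall t, (t < d)%nat -> lam t = 0%Z) ->
  (d <= m)%nat.
Proof.
  induction m as [|m IH]; intros c d u A Hu Hind.
  - destruct d as [|d]; [lia|].
    exfalso.
    assert (H := Hind (fun t => if Nat.eqb t 0 then 1%Z else 0%Z)).
    specialize (H ltac:(apply rs_zero; intros t Ht; rewrite Hu by lia; simpl; ring) 0%nat ltac:(lia)).
    simpl in H. discriminate.
  - destruct (classic_dec_all d A m) as [Hall | [t0 [Ht0 Hnz]]].
    + apply le_S. apply (IH c d u A); auto.
      intros t Ht. rewrite Hu by auto. simpl. rewrite Hall by auto. simpl. ring.
    + destruct d as [|d]; [lia|].
      set (a0 := A t0 m).
      set (u' := fun t => IZR a0 * u (skp t0 t) - IZR (A (skp t0 t) m) * u t0).
      set (A' := fun t e => (a0 * A (skp t0 t) e - A (skp t0 t) m * A t0 e)%Z).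
      enough (d <= m)%nat by lia.
      apply (IH c d u' A').
      * intros t Ht. unfold u', A'.
        assert (Hs : (skp t0 t < S d)%nat) by (unfold skp; destruct (Nat.ltb_spec t t0); lia).
        rewrite (Hu (skp t0 t)) by auto. rewrite (Hu t0) by lia. simpl.
        fold a0.
        replace (IZR a0 * (rs m (fun e => IZR (A (skp t0 t) e) * c e) + IZR (A (skp t0 t) m) * c m) -
          IZR (A (skp t0 t) m) * (rs m (fun e => IZR (A t0 e) * c e) + IZR a0 * c m))
          with (IZR a0 * rs m (fun e => IZR (A (skp t0 t) e) * c e) +
                (- IZR (A (skp t0 t) m)) * rs m (fun e => IZR (A t0 e) * c e)) by ring.
        rewrite <- !rs_scal, <- rs_plus. apply rs_ext. intros e _.
        rewrite minus_IZR, !mult_IZR. ring.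
      * intros lam Hl t Ht.
        set (mu := fun s => if Nat.eqb s t0 then
                     (- fold_right Z.add 0 (map (fun r => lam r * A (skp t0 r) m) (seq 0 d)))%Z
                   else if Nat.ltb s t0 then (lam s * a0)%Z else (lam (pred s) * a0)%Z).
        assert (Hmu : forall s, (s < S d)%nat -> mu s = 0%Z).
        { apply Hind. rewrite (rs_skip d _ t0) by lia.
          unfold mu at 1. rewrite Nat.eqb_refl.
          rewrite (rs_ext d _ (fun s => IZR (lam s * a0) * u (skp t0 s))).
          2:{ intros s Hs. unfold mu, skp. destruct (Nat.ltb_spec s t0).
              - destruct (Nat.eqb_spec s t0); [lia|]. destruct (Nat.ltb_spec s t0); [reflexivity|lia].
              - destruct (Nat.eqb_spec (S s) t0); [lia|]. destruct (Nat.ltb_spec (S s) t0); [lia|]. reflexivity. }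
          rewrite <- Hl. unfold u'.
          assert (Hfold : forall n0, IZR (fold_right Z.add 0 (map (fun r => lam r * A (skp t0 r) m) (seq 0 n0)))%Z
                      = rs n0 (fun r => IZR (lam r) * IZR (A (skp t0 r) m))).
          { induction n0; [reflexivity|]. rewrite seq_S, map_app, fold_right_app. simpl.
            rewrite <- IHn0. rewrite <- mult_IZR, <- plus_IZR. f_equal.
            generalize (map (fun r => (lam r * A (skp t0 r) m)%Z) (seq 0 n0)).
            intros l. induction l; simpl; [ring|]. rewrite IHl. ring. }
          rewrite opp_IZR, Hfold.
          rewrite (rs_ext d (fun s => IZR (lam s * a0) * u (skp t0 s))
                          (fun s => IZR (lam s) * (IZR a0 * u (skp t0 s)))) by (intros; rewrite mult_IZR; ring).
          rewrite (rs_ext d (fun t => IZR (lam t) * (IZR a0 * u (skp t0 t) - IZR (A (skp t0 t) m) * u t0))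
                    (fun t => IZR (lam t) * (IZR a0 * u (skp t0 t)) + (- u t0) * (IZR (lam t) * IZR (A (skp t0 t) m))))
            by (intros; ring).
          rewrite rs_plus, rs_scal. ring. }
        assert (Hs : (skp t0 t < S d)%nat) by (unfold skp; destruct (Nat.ltb_spec t t0); lia).
        specialize (Hmu _ Hs). unfold mu, skp in Hmu.
        destruct (Nat.ltb_spec t t0).
        -- replace (Nat.eqb t t0) with false in Hmu by (symmetry; apply Nat.eqb_neq; lia).
          replace (Nat.ltb t t0) with true in Hmu by (symmetry; apply Nat.ltb_lt; lia).
          apply Z.mul_eq_0 in Hmu. destruct Hmu; auto. contradiction.
        -- replace (Nat.eqb (S t) t0) with false in Hmu by (symmetry; apply Nat.eqb_neq; lia).
          replace (Nat.ltb (S t) t0) with false in Hmu by (symmetry; apply Nat.ltb_ge; lia).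
          simpl in Hmu. apply Z.mul_eq_0 in Hmu. destruct Hmu; auto. contradiction.
Qed.

End A.
Import A.

Module B.
Import ListNotations.
Open Scope R_scope.

Lemma prime_divisor_ex : forall n (z : Z), (1 < z)%Z -> (Z.to_nat z <= n)%nat ->
  exists p, prime p /\ (p | z)%Z.
Proof.
  induction n; intros z Hz Hn.
  - lia.
  - destruct (prime_dec z) as [Hp|Hp].
    + exists z. split; auto. apply Z.divide_refl.
    + destruct (not_prime_divide z Hz Hp) as [m [Hm Hmz]].
      assert (Z.to_nat m < Z.to_nat z)%nat by (apply Z2Nat.inj_lt; lia).
      destruct (IHn m) as [p [Hp1 Hp2]]; try lia.
      exists p. split; auto. eapply Z.divide_trans; eauto.
Qed.

Fixpoint zfact (n : nat) : Z := match n with O => 1%Z | S n' => (Z.of_nat (S n') * zfact n')%Z end.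

Lemma zfact_pos n : (1 <= zfact n)%Z.
Proof. induction n; [simpl; lia|]. change (zfact (S n)) with (Z.of_nat (S n) * zfact n)%Z. nia. Qed.

Lemma zfact_div n m : (1 <= m)%Z -> (m <= Z.of_nat n)%Z -> (m | zfact n)%Z.
Proof.
  induction n; intros H1 H2.
  - lia.
  - change (zfact (S n)) with (Z.of_nat (S n) * zfact n)%Z. destruct (Z.eq_dec m (Z.of_nat (S n))).
    + subst. apply Z.divide_factor_l.
    + apply Z.divide_mul_r. apply IHn; lia.
Qed.

Lemma exists_prime_gt (N : Z) : exists p, prime p /\ (N < p)%Z.
Proof.
  set (n := Z.to_nat N).
  destruct (prime_divisor_ex (Z.to_nat (zfact n + 1)) (zfact n + 1)) as [p [Hp Hd]].
  - pose proof (zfact_pos n). lia.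
  - lia.
  - exists p. split; auto.
    pose proof (prime_ge_2 p Hp).
    destruct (Z_lt_le_dec N p) as [|Hle]; auto.
    exfalso.
    assert (p | zfact n)%Z by (apply zfact_div; lia).
    assert (p | 1)%Z.
    { replace 1%Z with ((zfact n + 1) - zfact n)%Z by ring. apply Z.divide_sub_r; auto. }
    apply Z.divide_pos_le in H1; lia.
Qed.

Definition nextp (N : Z) : Z := proj1_sig (constructive_indefinite_description _ (exists_prime_gt N)).

Lemma nextp_spec N : prime (nextp N) /\ (N < nextp N)%Z.
Proof. unfold nextp. destruct (constructive_indefinite_description _ _). auto. Qed.

Fixpoint P (t : nat) : Z := match t with O => nextp 1 | S t' => nextp (P t') end.

Lemma P_prime t : prime (P t).
Proof. destruct t; simpl; apply nextp_spec. Qed.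

Lemma P_ge2 t : (2 <= P t)%Z.
Proof. apply prime_ge_2, P_prime. Qed.

Lemma P_mono t s : (t < s)%nat -> (P t < P s)%Z.
Proof.
  induction s; intros H; [lia|].
  simpl. pose proof (nextp_spec (P s)) as [_ H2].
  destruct (Nat.eq_dec t s); [subst; lia|]. specialize (IHs ltac:(lia)). lia.
Qed.

Lemma P_inj t s : P t = P s -> t = s.
Proof.
  intros H. destruct (lt_eq_lt_dec t s) as [[h|h]|h]; auto.
  - apply P_mono in h; lia.
  - apply P_mono in h; lia.
Qed.

Section Indep.
Variable q : nat -> Z.
Hypothesis qprime : forall t, prime (q t).

Fixpoint zprod (d : nat) (e : nat -> nat) : Z :=
  match d with O => 1%Z | S d' => (zprod d' e * q d' ^ Z.of_nat (e d'))%Z end.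

Lemma zprod_pos d e : (0 < zprod d e)%Z.
Proof.
  induction d; simpl; [lia|]. apply Z.mul_pos_pos; auto.
  apply Z.pow_pos_nonneg; [|lia]. pose proof (prime_ge_2 _ (qprime d)). lia.
Qed.

Lemma ln_zprod d e : ln (IZR (zprod d e)) = rs d (fun t => INR (e t) * ln (IZR (q t))).
Proof.
  induction d; simpl.
  - apply ln_1.
  - rewrite mult_IZR, ln_mult.
    + rewrite IHd, <- pow_IZR, ln_pow; auto.
      apply IZR_lt. pose proof (prime_ge_2 _ (qprime d)). lia.
    + apply IZR_lt, zprod_pos.
    + apply IZR_lt. apply Z.pow_pos_nonneg; [|lia]. pose proof (prime_ge_2 _ (qprime d)). lia.
Qed.

Lemma prime_div_pow p a n : prime p -> prime a -> (p | a ^ Z.of_nat n)%Z -> p = a /\ (0 < n)%nat.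
Proof.
  intros Hp Ha. induction n; intros H.
  - simpl in H. apply Z.divide_1_r in H. pose proof (prime_ge_2 _ Hp). lia.
  - rewrite Nat2Z.inj_succ, Z.pow_succ_r in H by lia.
    apply prime_mult in H; auto. destruct H as [H|H].
    + split; [apply prime_div_prime; auto| lia].
    + destruct (IHn H). split; auto; lia.
Qed.

Lemma prime_div_zprod p d e : prime p -> (p | zprod d e)%Z ->
  exists t, (t < d)%nat /\ (0 < e t)%nat /\ p = q t.
Proof.
  intros Hp. induction d; simpl; intros H.
  - apply Z.divide_1_r in H. pose proof (prime_ge_2 _ Hp). lia.
  - apply prime_mult in H; auto. destruct H as [H|H].
    + destruct (IHd H) as [t [? [? ?]]]. exists t. repeat split; auto; lia.
    + apply prime_div_pow in H; auto. destruct H. exists d. repeat split; auto; lia.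
Qed.

Lemma div_zprod d e t : (t < d)%nat -> (0 < e t)%nat -> (q t | zprod d e)%Z.
Proof.
  induction d; intros H1 H2; [lia|]. simpl.
  destruct (Nat.eq_dec t d).
  - subst. apply Z.divide_mul_r. destruct (e d) eqn:E; [lia|].
    rewrite Nat2Z.inj_succ, Z.pow_succ_r by lia. apply Z.divide_factor_l.
  - apply Z.divide_mul_l. apply IHd; auto; lia.
Qed.

Lemma indep_ln d : (forall t1 t2, (t1 < d)%nat -> (t2 < d)%nat -> q t1 = q t2 -> t1 = t2) ->
  forall lam : nat -> Z, rs d (fun t => IZR (lam t) * ln (IZR (q t))) = 0 ->
  forall t, (t < d)%nat -> lam t = 0%Z.
Proof.
  intros Hinj lam H t0 Ht0.
  set (ep := fun t => Z.to_nat (lam t)). set (en := fun t => Z.to_nat (- lam t)).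
  assert (Hsplit : rs d (fun t => IZR (lam t) * ln (IZR (q t))) =
      ln (IZR (zprod d ep)) - ln (IZR (zprod d en))).
  { rewrite !ln_zprod. unfold Rminus. rewrite <- (Rmult_1_l (rs d (fun t => INR (en t) * _))).
    rewrite Ropp_mult_distr_l, <- rs_scal, <- rs_plus. apply rs_ext. intros t _.
    unfold ep, en. rewrite !INR_IZR_INZ.
    destruct (Z_le_gt_dec 0 (lam t)).
    - rewrite Z2Nat.id by lia. replace (Z.to_nat (- lam t)) with 0%nat by lia. simpl. ring.
    - rewrite (Z2Nat.id (- lam t)) by lia. replace (Z.to_nat (lam t)) with 0%nat by lia.
      rewrite opp_IZR. simpl. ring. }
  rewrite Hsplit in H.
  assert (Heq : zprod d ep = zprod d en).
  { apply eq_IZR. apply ln_inv; try (apply IZR_lt, zprod_pos). lra. }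
  destruct (Z.lt_trichotomy (lam t0) 0) as [Hl|[Hl|Hl]]; auto; exfalso.
  - assert (Hd : (q t0 | zprod d ep)%Z).
    { rewrite Heq. apply div_zprod; auto. unfold en. lia. }
    destruct (prime_div_zprod _ _ _ (qprime t0) Hd) as [t [Ht [He Hq]]].
    assert (t = t0) by (apply Hinj; auto). subst. unfold ep in He. lia.
  - assert (Hd : (q t0 | zprod d en)%Z).
    { rewrite <- Heq. apply div_zprod; auto. unfold ep. lia. }
    destruct (prime_div_zprod _ _ _ (qprime t0) Hd) as [t [Ht [He Hq]]].
    assert (t = t0) by (apply Hinj; auto). subst. unfold en in He. lia.
Qed.
End Indep.

End B.
Import B.

Module C.
Import ListNotations.
Open Scope R_scope.

Definition pos (Ht u : nat) : R * R := (INR (u / Ht), INR (u mod Ht)).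

Definition unit_edge (Ht : nat) (e : nat * nat) : Prop :=
  exists c r, ((r + 1 < Ht)%nat /\ e = (c * Ht + r, c * Ht + (r + 1)))%nat \/
              ((r < Ht)%nat /\ e = (c * Ht + r, (c + 1) * Ht + r))%nat.

Lemma pos_enc Ht c r : (r < Ht)%nat -> pos Ht (c * Ht + r) = (INR c, INR r).
Proof.
  intros H. unfold pos. f_equal; f_equal.
  - rewrite Nat.div_add_l by lia. rewrite Nat.div_small by lia. lia.
  - rewrite Nat.add_comm, Nat.Div0.mod_add. apply Nat.mod_small; lia.
Qed.

Definition gam (Ht : nat) (l : list (nat * nat)) (i : nat) (t : R) : R * R :=
  let e := nth i l (0%nat, 0%nat) in
  (fst (pos Ht (fst e)) + t * (fst (pos Ht (snd e)) - fst (pos Ht (fst e))),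
   snd (pos Ht (fst e)) + t * (snd (pos Ht (snd e)) - snd (pos Ht (fst e)))).

Lemma int01 (z : Z) : 0 <= IZR z <= 1 -> IZR z = 0 \/ IZR z = 1.
Proof.
  intros [H1 H2]. apply le_IZR in H1. apply le_IZR in H2.
  assert (z = 0 \/ z = 1)%Z as [->| ->] by lia; auto.
Qed.

Lemma int01s (z : Z) : 0 < IZR z < 1 -> False.
Proof. intros [H1 H2]. apply lt_IZR in H1. apply lt_IZR in H2. lia. Qed.

Lemma INR_diff a b : INR a - INR b = IZR (Z.of_nat a - Z.of_nat b).
Proof. rewrite minus_IZR, <- !INR_IZR_INZ. reflexivity. Qed.

Section Planar.
Variable N : network.
Variable Ht : nat.
Hypothesis Ht_pos : (1 < Ht)%nat.
Hypothesis Hunit : Forall (unit_edge Ht) (edges N).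
Hypothesis Hnodup : NoDup (edges N).

Lemma gam_shape i : (i < length (edges N))%nat -> exists c r (b : bool),
  (r < Ht)%nat /\
  nth i (edges N) (0%nat,0%nat) = (if b then (c*Ht + r, c*Ht + (r+1)) else (c*Ht+r, (c+1)*Ht + r))%nat /\
  pos Ht (fst (nth i (edges N) (0%nat,0%nat))) = (INR c, INR r) /\
  pos Ht (snd (nth i (edges N) (0%nat,0%nat))) = (if b then (INR c, INR r + 1) else (INR c + 1, INR r)) /\
  forall t, gam Ht (edges N) i t = (if b then (INR c, INR r + t) else (INR c + t, INR r)).
Proof.
  intros Hi. rewrite Forall_forall in Hunit.
  destruct (Hunit _ (nth_In _ (0%nat,0%nat) Hi)) as [c [r [[H1 H2]|[H1 H2]]]].
  - exists c, r, true.
    assert (P0 : pos Ht (fst (nth i (edges N) (0%nat,0%nat))) = (INR c, INR r))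
      by (rewrite H2; simpl fst; apply pos_enc; lia).
    assert (P1 : pos Ht (snd (nth i (edges N) (0%nat,0%nat))) = (INR c, INR r + 1))
      by (rewrite H2; simpl snd; rewrite pos_enc by lia; rewrite plus_INR; reflexivity).
    repeat split; auto; try lia. intros t. unfold gam. rewrite P0, P1. simpl. f_equal; ring.
  - exists c, r, false.
    assert (P0 : pos Ht (fst (nth i (edges N) (0%nat,0%nat))) = (INR c, INR r))
      by (rewrite H2; simpl fst; apply pos_enc; lia).
    assert (P1 : pos Ht (snd (nth i (edges N) (0%nat,0%nat))) = (INR c + 1, INR r))
      by (rewrite H2; simpl snd; rewrite pos_enc by lia; rewrite plus_INR; reflexivity).
    repeat split; auto; try lia. intros t. unfold gam. rewrite P0, P1. simpl. f_equal; ring.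
Qed.

Lemma planar_grid : (forall u v, (u < nverts N)%nat -> (v < nverts N)%nat -> True) -> planar N.
Proof.
  intros _. exists (pos Ht), (gam Ht (edges N)). split; [|split].
  - intros u v _ _ H. unfold pos in H. injection H as H1 H2.
    apply INR_eq in H1. apply INR_eq in H2.
    rewrite (Nat.div_mod u Ht), (Nat.div_mod v Ht) by lia. rewrite H1, H2. reflexivity.
  - intros i Hi. simpl.
    destruct (gam_shape i Hi) as [c [r [b [Hr [He [H0 [H1 Hg]]]]]]].
    split; [|split; [|split; [|split]]].
    + intros t _ eps Heps. exists eps. split; auto. intros s _ Hs. rewrite !Hg.
      destruct b; simpl; unfold Rminus;
        [ rewrite Rplus_opp_r, Rabs_R0 | ]; split; try lra;
        try (replace (INR c + s + - (INR c + t)) with (s - t) by ring; auto);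
        try (replace (INR r + s + - (INR r + t)) with (s - t) by ring; auto);
        try (rewrite Rplus_opp_r, Rabs_R0; lra).
    + intros s t _ _ H. rewrite !Hg in H. destruct b; injection H; lra.
    + rewrite Hg, H0. destruct b; f_equal; ring.
    + rewrite Hg, H1. destruct b; f_equal; ring.
    + intros t w Ht01 _ H. rewrite Hg in H. unfold pos in H.
      destruct b; injection H as H2 H3.
      * apply (int01s (Z.of_nat (w mod Ht) - Z.of_nat r)). rewrite <- INR_diff. lra.
      * apply (int01s (Z.of_nat (w / Ht) - Z.of_nat c)). rewrite <- INR_diff. lra.
  - intros i j s t Hi Hj Hij Hs Ht' H.
    destruct (gam_shape i Hi) as [c1 [r1 [b1 [Hr1 [He1 [_ [_ Hg1]]]]]]].
    destruct (gam_shape j Hj) as [c2 [r2 [b2 [Hr2 [He2 [_ [_ Hg2]]]]]]].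
    assert (Hne : nth i (edges N) (0%nat,0%nat) <> nth j (edges N) (0%nat,0%nat)).
    { intros E. apply Hij. eapply NoDup_nth; eauto. }
    rewrite Hg1, Hg2 in H.
    destruct b1, b2; injection H as Hx Hy.
    + apply INR_eq in Hx. subst c2.
      assert (Hz : INR r2 - INR r1 = s - t) by lra. rewrite INR_diff in Hz.
      destruct (Z.lt_trichotomy (Z.of_nat r2 - Z.of_nat r1) 0) as [Hl|[Hl|Hl]].
      * assert (Z.of_nat r2 - Z.of_nat r1 <= -1)%Z by lia. apply IZR_le in H. lra.
      * exfalso. apply Hne. rewrite He1, He2. assert (r1 = r2) by lia. subst. reflexivity.
      * assert (1 <= Z.of_nat r2 - Z.of_nat r1)%Z by lia. apply IZR_le in H. lra.
    + split.
      * destruct (int01 (Z.of_nat r2 - Z.of_nat r1)) as [h|h]; rewrite <- INR_diff in *; lra.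
      * destruct (int01 (Z.of_nat c1 - Z.of_nat c2)) as [h|h]; rewrite <- INR_diff in *; lra.
    + split.
      * destruct (int01 (Z.of_nat c2 - Z.of_nat c1)) as [h|h]; rewrite <- INR_diff in *; lra.
      * destruct (int01 (Z.of_nat r1 - Z.of_nat r2)) as [h|h]; rewrite <- INR_diff in *; lra.
    + apply INR_eq in Hy. subst r2.
      assert (Hz : INR c2 - INR c1 = s - t) by lra. rewrite INR_diff in Hz.
      destruct (Z.lt_trichotomy (Z.of_nat c2 - Z.of_nat c1) 0) as [Hl|[Hl|Hl]].
      * assert (Z.of_nat c2 - Z.of_nat c1 <= -1)%Z by lia. apply IZR_le in H. lra.
      * exfalso. apply Hne. rewrite He1, He2. assert (c1 = c2) by lia. subst. reflexivity.
      * assert (1 <= Z.of_nat c2 - Z.of_nat c1)%Z by lia. apply IZR_le in H. lra.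
Qed.
End Planar.

End C.
Import C.

Module E0.
Import ListNotations.
Open Scope R_scope.

Definition lsum (l : list R) : R := fold_right Rplus 0 l.

Lemma lsum_app l1 l2 : lsum (l1 ++ l2) = lsum l1 + lsum l2.
Proof. induction l1; simpl; [lra|]. unfold lsum in *. simpl. rewrite IHl1. lra. Qed.

Lemma lsum_map_app {A} (f : A -> R) l1 l2 : lsum (map f (l1 ++ l2)) = lsum (map f l1) + lsum (map f l2).
Proof. rewrite map_app. apply lsum_app. Qed.

Lemma lsum_flat_map {A B} (f : B -> R) (g : A -> list B) l :
  lsum (map f (flat_map g l)) = lsum (map (fun a => lsum (map f (g a))) l).
Proof. induction l; simpl; [reflexivity|]. rewrite lsum_map_app. unfold lsum at 3. simpl. rewrite IHl. reflexivity. Qed.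

Lemma lsum_le {A} (f g : A -> R) l : (forall a, In a l -> f a <= g a) -> lsum (map f l) <= lsum (map g l).
Proof.
  induction l; simpl; intros H; [lra|]. unfold lsum in *; simpl.
  apply Rplus_le_compat; [apply H; auto | apply IHl; auto].
Qed.

Lemma lsum_ext {A} (f g : A -> R) l : (forall a, In a l -> f a = g a) -> lsum (map f l) = lsum (map g l).
Proof. intros H. rewrite (map_ext_in f g l H). reflexivity. Qed.

Lemma lsum_nonneg {A} (f : A -> R) l : (forall a, In a l -> 0 <= f a) -> 0 <= lsum (map f l).
Proof.
  intros H. replace 0 with (lsum (map (fun _ => 0) l)).
  - apply lsum_le. auto.
  - clear H. induction l; [reflexivity|]. unfold lsum in *. simpl. rewrite IHl. lra.
Qed.

Lemma lsum_ge_in {A} (f : A -> R) l a : (forall a, In a l -> 0 <= f a) -> In a l -> f a <= lsum (map f l).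
Proof.
  induction l; simpl; intros H Ha; [contradiction|]. unfold lsum in *. simpl.
  destruct Ha as [<-|Ha].
  - pose proof (lsum_nonneg f l ltac:(auto)). unfold lsum in H0. lra.
  - specialize (IHl ltac:(auto) Ha). pose proof (H a0 (or_introl eq_refl)). lra.
Qed.

Lemma lsum_plus {A} (f g : A -> R) l : lsum (map (fun a => f a + g a) l) = lsum (map f l) + lsum (map g l).
Proof. induction l; simpl; [unfold lsum; simpl; lra|]. unfold lsum in *; simpl. rewrite IHl. lra. Qed.

Lemma lsum_scal {A} c (f : A -> R) l : lsum (map (fun a => c * f a) l) = c * lsum (map f l).
Proof. induction l; simpl; [unfold lsum; simpl; lra|]. unfold lsum in *; simpl. rewrite IHl. lra. Qed.

Lemma rs_shift n g : rs (S n) g = g 0%nat + rs n (fun i => g (S i)).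
Proof. induction n; simpl; [lra|]. simpl in IHn. rewrite IHn. lra. Qed.

Lemma lsum_nth {A} (f : A -> R) l d : lsum (map f l) = rs (length l) (fun i => f (nth i l d)).
Proof.
  induction l as [|a l IH]; [reflexivity|].
  simpl length. rewrite rs_shift. unfold lsum in *. simpl map. simpl fold_right. rewrite IH.
  reflexivity.
Qed.

Lemma lsum_switch (b : nat -> bool) (c : R) L :
  (forall t, (t < L)%nat -> b t = true -> b (S t) = true) ->
  lsum (map (fun t => if Bool.eqb (b t) (b (S t)) then 0 else c) (seq 0 L)) =
  if Bool.eqb (b 0%nat) (b L) then 0 else c.
Proof.
  induction L; intros H.
  - simpl. destruct (b 0%nat); reflexivity.
  - rewrite seq_S, lsum_map_app, IHL by (intros; apply H; [lia|auto]). simpl. unfold lsum; simpl.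
    assert (HH : b 0%nat = true -> forall t, (t <= S L)%nat -> b t = true).
    { intros h0. induction t; intros Ht; auto. apply H; [lia|]. apply IHt; lia. }
    destruct (b 0%nat) eqn:E0, (b L) eqn:EL, (b (S L)) eqn:ES; simpl; try lra;
      try (rewrite HH in EL by (auto; lia); discriminate);
      try (rewrite HH in ES by (auto; lia); discriminate);
      try (rewrite H in ES by (auto; lia); discriminate).
Qed.

Lemma switch_exists (b : nat -> bool) L : b 0%nat <> b L -> exists t, (t < L)%nat /\ b t <> b (S t).
Proof.
  induction L; intros H; [contradiction|].
  destruct (Bool.bool_dec (b L) (b (S L))).
  - destruct IHL as [t [? ?]]; [congruence|]. exists t; split; auto.
  - exists L; split; auto.
Qed.

End E0.
Import E0.

Module D.
Import ListNotations.
Open Scope R_scope.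

Section Constr.
Variable n : nat.
Hypothesis Hn : (3 <= n)%nat.

Definition Ht : nat := (n + n * n)%nat.
Definition enc (c r : nat) : nat := (c * Ht + r)%nat.
Definition RR (x y : nat) : nat := (n + x * n + y)%nat.
Definition CC (x y : nat) : nat := (n + y * n + x)%nat.

Definition mw (x y : nat) : R := ln (IZR (P (x * n + y))).

Definition pairs : list (nat * nat) :=
  flat_map (fun x => map (fun y => (x, y)) (seq 0 n)) (seq 0 n).

Definition Mbig : R := 1 + lsum (map (fun p => mw (fst p) (snd p)) pairs).

Definition spA : list (nat * nat) :=
  flat_map (fun x => map (fun y => (enc x (RR x y), enc x (RR x y + 1))) (seq 0 (n - 1))) (seq 0 n).
Definition spB : list (nat * nat) :=
  flat_map (fun y => map (fun x => (enc (CC x y) y, enc (CC x y + 1) y)) (seq 0 (n - 1))) (seq 0 n).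
Definition hor (x y : nat) : list (nat * nat) :=
  map (fun t => (enc (x + t) (RR x y), enc (x + t + 1) (RR x y))) (seq 0 (n + y * n)).
Definition ver (x y : nat) : list (nat * nat) :=
  map (fun t => (enc (CC x y) (y + t), enc (CC x y) (y + t + 1))) (seq 0 (n + x * n)).
Definition own (p : nat * nat) : list (nat * nat) := hor (fst p) (snd p) ++ ver (fst p) (snd p).

Definition allE : list (nat * nat) := spA ++ spB ++ flat_map own pairs.

Definition costf (e : nat * nat) : R :=
  let u := fst e in let c := (u / Ht)%nat in let r := (u mod Ht)%nat in
  if Nat.eqb (snd e) (S u) then (if Nat.ltb c n then Mbig else mw ((c - n) mod n) ((c - n) / n))
  else (if Nat.ltb r n then Mbig else mw ((r - n) / n) ((r - n) mod n)).

Definition G : network := mkNet (Ht * Ht) allE costf.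

Lemma Ht_gt : (n * n <= Ht /\ 1 < Ht)%nat.
Proof. unfold Ht. nia. Qed.

Lemma enc_div c r : (r < Ht)%nat -> (enc c r / Ht = c)%nat.
Proof. intros H. unfold enc. rewrite Nat.div_add_l by lia. rewrite Nat.div_small by lia. lia. Qed.

Lemma enc_mod c r : (r < Ht)%nat -> (enc c r mod Ht = r)%nat.
Proof. intros H. unfold enc. rewrite Nat.add_comm, Nat.Div0.mod_add. apply Nat.mod_small; lia. Qed.

Lemma divmod_n x y : (y < n)%nat -> ((x * n + y) / n = x /\ (x * n + y) mod n = y)%nat.
Proof.
  intros H. split.
  - rewrite Nat.div_add_l by lia. rewrite Nat.div_small by lia. lia.
  - rewrite Nat.add_comm, Nat.Div0.mod_add. apply Nat.mod_small; lia.
Qed.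

Lemma mw_pos x y : 0 < mw x y.
Proof.
  unfold mw. rewrite <- ln_1. apply ln_increasing; [lra|].
  apply IZR_lt. pose proof (P_ge2 (x * n + y)). lia.
Qed.

Lemma in_pairs p : In p pairs <-> (fst p < n /\ snd p < n)%nat.
Proof.
  unfold pairs. rewrite in_flat_map. split.
  - intros [x [Hx Hp]]. apply in_map_iff in Hp. destruct Hp as [y [<- Hy]].
    apply in_seq in Hx. apply in_seq in Hy. simpl. lia.
  - destruct p as [x y]. simpl. intros [Hx Hy]. exists x. split; [apply in_seq; lia|].
    apply in_map_iff. exists y. split; auto. apply in_seq; lia.
Qed.

Lemma Mbig_pos : 0 < Mbig.
Proof.
  unfold Mbig. pose proof (lsum_nonneg (fun p => mw (fst p) (snd p)) pairs
     ltac:(intros; apply Rlt_le, mw_pos)). lra.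
Qed.

Lemma in_spA e : In e spA -> exists x y, (x < n /\ y < n - 1)%nat /\ e = (enc x (RR x y), enc x (RR x y + 1)).
Proof.
  unfold spA. rewrite in_flat_map. intros [x [Hx He]]. apply in_map_iff in He.
  destruct He as [y [<- Hy]]. apply in_seq in Hx. apply in_seq in Hy. exists x, y. split; [lia|auto].
Qed.

Lemma in_spB e : In e spB -> exists x y, (y < n /\ x < n - 1)%nat /\ e = (enc (CC x y) y, enc (CC x y + 1) y).
Proof.
  unfold spB. rewrite in_flat_map. intros [y [Hy He]]. apply in_map_iff in He.
  destruct He as [x [<- Hx]]. apply in_seq in Hx. apply in_seq in Hy. exists x, y. split; [lia|auto].
Qed.

Lemma in_hor x y e : In e (hor x y) -> exists t, (t < n + y * n)%nat /\ e = (enc (x + t) (RR x y), enc (x + t + 1) (RR x y)).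
Proof. unfold hor. intros H. apply in_map_iff in H. destruct H as [t [<- Ht]]. apply in_seq in Ht. exists t. split; [lia|auto]. Qed.

Lemma in_ver x y e : In e (ver x y) -> exists t, (t < n + x * n)%nat /\ e = (enc (CC x y) (y + t), enc (CC x y) (y + t + 1)).
Proof. unfold ver. intros H. apply in_map_iff in H. destruct H as [t [<- Ht]]. apply in_seq in Ht. exists t. split; [lia|auto]. Qed.

Lemma in_allE e : In e allE ->
  In e spA \/ In e spB \/ exists x y, (x < n /\ y < n)%nat /\ (In e (hor x y) \/ In e (ver x y)).
Proof.
  unfold allE. intros H. apply in_app_or in H. destruct H as [H|H]; auto.
  apply in_app_or in H. destruct H as [H|H]; auto. right; right.
  apply in_flat_map in H. destruct H as [[x y] [Hp He]]. apply in_pairs in Hp. simpl in *.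
  exists x, y. split; auto. unfold own in He. simpl in He. apply in_app_or in He. auto.
Qed.

Lemma RR_lt x y : (x < n -> y < n -> RR x y < Ht)%nat.
Proof. unfold RR, Ht. nia. Qed.
Lemma CC_lt x y : (x < n -> y < n -> CC x y < Ht)%nat.
Proof. unfold CC, Ht. nia. Qed.

Lemma cost_hor x y e : (x < n)%nat -> (y < n)%nat -> In e (hor x y) -> costf e = mw x y.
Proof.
  intros Hx Hy H. destruct (in_hor x y e H) as [t [Ht' ->]]. pose proof Ht_gt. pose proof (RR_lt x y Hx Hy).
  unfold costf. simpl fst; simpl snd.
  replace (Nat.eqb (enc (x + t + 1) (RR x y)) (S (enc (x + t) (RR x y)))) with false
    by (symmetry; apply Nat.eqb_neq; unfold enc; nia).
  rewrite enc_mod by lia. replace (Nat.ltb (RR x y) n) with false by (symmetry; apply Nat.ltb_ge; unfold RR; lia).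
  replace (RR x y - n)%nat with (x * n + y)%nat by (unfold RR; lia).
  destruct (divmod_n x y Hy) as [-> ->]. reflexivity.
Qed.

Lemma cost_ver x y e : (x < n)%nat -> (y < n)%nat -> In e (ver x y) -> costf e = mw x y.
Proof.
  intros Hx Hy H. destruct (in_ver x y e H) as [t [Ht' ->]]. pose proof Ht_gt. pose proof (CC_lt x y Hx Hy).
  assert (y + t + 1 < Ht)%nat by (unfold Ht; nia).
  unfold costf. simpl fst; simpl snd.
  replace (Nat.eqb (enc (CC x y) (y + t + 1)) (S (enc (CC x y) (y + t)))) with true
    by (symmetry; apply Nat.eqb_eq; unfold enc; lia).
  rewrite enc_div by lia. replace (Nat.ltb (CC x y) n) with false by (symmetry; apply Nat.ltb_ge; unfold CC; lia).
  replace (CC x y - n)%nat with (y * n + x)%nat by (unfold CC; lia).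
  destruct (divmod_n y x Hx) as [-> ->]. reflexivity.
Qed.

Lemma cost_spA e : In e spA -> costf e = Mbig.
Proof.
  intros H. destruct (in_spA e H) as [x [y [Hxy ->]]]. pose proof Ht_gt. pose proof (RR_lt x (y+1) ltac:(lia) ltac:(lia)).
  assert (RR x y + 1 < Ht)%nat by (unfold RR in *; lia).
  unfold costf. simpl fst; simpl snd.
  replace (Nat.eqb (enc x (RR x y + 1)) (S (enc x (RR x y)))) with true
    by (symmetry; apply Nat.eqb_eq; unfold enc; lia).
  rewrite enc_div by lia. replace (Nat.ltb x n) with true by (symmetry; apply Nat.ltb_lt; lia). reflexivity.
Qed.

Lemma cost_spB e : In e spB -> costf e = Mbig.
Proof.
  intros H. destruct (in_spB e H) as [x [y [Hxy ->]]]. pose proof Ht_gt. pose proof (CC_lt x y ltac:(lia) ltac:(lia)).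
  unfold costf. simpl fst; simpl snd.
  replace (Nat.eqb (enc (CC x y + 1) y) (S (enc (CC x y) y))) with false
    by (symmetry; apply Nat.eqb_neq; unfold enc; nia).
  rewrite enc_mod by lia. replace (Nat.ltb y n) with true by (symmetry; apply Nat.ltb_lt; lia). reflexivity.
Qed.

Lemma cost_pos e : In e allE -> 0 < costf e.
Proof.
  intros H. destruct (in_allE e H) as [h|[h|[x [y [[Hx Hy] [h|h]]]]]].
  - rewrite cost_spA; auto. apply Mbig_pos.
  - rewrite cost_spB; auto. apply Mbig_pos.
  - rewrite (cost_hor x y); auto. apply mw_pos.
  - rewrite (cost_ver x y); auto. apply mw_pos.
Qed.
End Constr.

End D.
Import D.

Module D2.
Import ListNotations.
Open Scope R_scope.

Lemma NoDup_map_seq {B} (f : nat -> B) L :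
  (forall t1 t2, (t1 < L)%nat -> (t2 < L)%nat -> f t1 = f t2 -> t1 = t2) -> NoDup (map f (seq 0 L)).
Proof.
  intros H. apply NoDup_nth with (d := f 0%nat). rewrite length_map, length_seq.
  intros i j Hi Hj E.
  rewrite !map_nth, !seq_nth in E by lia. simpl in E. apply H; auto.
Qed.

Lemma NoDup_flat_map' {A B} (g : A -> list B) l :
  NoDup l -> (forall a, In a l -> NoDup (g a)) ->
  (forall a b e, In a l -> In b l -> a <> b -> In e (g a) -> In e (g b) -> False) ->
  NoDup (flat_map g l).
Proof.
  induction l as [|a l IH]; intros H1 H2 H3; simpl; [constructor|].
  inversion H1; subst. apply NoDup_app.
  - apply H2; simpl; auto.
  - apply IH; auto.
    + intros a0 h. apply H2; simpl; auto.
    + intros a0 b e h1 h2 h3 h4 h5. apply (H3 a0 b e); simpl; auto.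
  - intros e He1 He2. apply in_flat_map in He2. destruct He2 as [b [Hb He2]].
    apply (H3 a b e); simpl; auto. intros ->; contradiction.
Qed.

Section Wf.
Variable n : nat.
Hypothesis Hn : (3 <= n)%nat.

Notation Ht := (Ht n).
Notation enc := (enc n).
Notation RR := (RR n).
Notation CC := (CC n).

Definition Oe (e : nat * nat) : bool := Nat.eqb (snd e) (S (fst e)).
Definition Col (e : nat * nat) : nat := (fst e / Ht)%nat.
Definition Row (e : nat * nat) : nat := (fst e mod Ht)%nat.

Lemma Htg : (n * n <= Ht /\ 1 < Ht /\ n + n * n = Ht)%nat.
Proof. unfold D.Ht. nia. Qed.

Lemma vert_info c r : (r + 1 < Ht)%nat -> (c < Ht)%nat ->
  Oe (enc c r, enc c (r + 1)) = true /\ Col (enc c r, enc c (r + 1)) = c /\ Row (enc c r, enc c (r + 1)) = r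
  /\ unit_edge Ht (enc c r, enc c (r + 1)) /\ (enc c r < enc c (r + 1) /\ enc c (r + 1) < Ht * Ht)%nat.
Proof.
  intros H1 H2. pose proof Htg. unfold Oe, Col, Row. simpl. rewrite (enc_div n Hn), (enc_mod n Hn) by lia.
  repeat split; auto.
  - apply Nat.eqb_eq. unfold D.enc. lia.
  - exists c, r. left. split; auto.
  - unfold D.enc. lia.
  - unfold D.enc. nia.
Qed.

Lemma hor_info c r : (r < Ht)%nat -> (c + 1 < Ht)%nat ->
  Oe (enc c r, enc (c + 1) r) = false /\ Col (enc c r, enc (c + 1) r) = c /\ Row (enc c r, enc (c + 1) r) = r
  /\ unit_edge Ht (enc c r, enc (c + 1) r) /\ (enc c r < enc (c + 1) r /\ enc (c + 1) r < Ht * Ht)%nat.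
Proof.
  intros H1 H2. pose proof Htg. unfold Oe, Col, Row. simpl. rewrite (enc_div n Hn), (enc_mod n Hn) by lia.
  repeat split; auto.
  - apply Nat.eqb_neq. unfold D.enc. nia.
  - exists c, r. right. split; auto.
  - unfold D.enc. nia.
  - unfold D.enc. nia.
Qed.

Definition good (e : nat * nat) : Prop :=
  unit_edge Ht e /\ (fst e < snd e /\ snd e < Ht * Ht)%nat.

Lemma info_spA e : In e (spA n) -> exists x y, (x < n /\ y < n - 1)%nat /\
  Oe e = true /\ Col e = x /\ Row e = RR x y /\ good e.
Proof.
  intros H. destruct (in_spA n Hn e H) as [x [y [Hxy ->]]]. pose proof Htg.
  assert (RR x y + 1 < Ht)%nat by (unfold D.RR; nia).
  destruct (vert_info x (RR x y)) as [h1 [h2 [h3 [h4 h5]]]]; try lia.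
  exists x, y. repeat split; auto; simpl; lia.
Qed.

Lemma info_spB e : In e (spB n) -> exists x y, (y < n /\ x < n - 1)%nat /\
  Oe e = false /\ Col e = CC x y /\ Row e = y /\ good e.
Proof.
  intros H. destruct (in_spB n Hn e H) as [x [y [Hxy ->]]]. pose proof Htg.
  assert (CC x y + 1 < Ht)%nat by (unfold D.CC; nia).
  destruct (hor_info (CC x y) y) as [h1 [h2 [h3 [h4 h5]]]]; try lia.
  exists x, y. repeat split; auto; simpl; lia.
Qed.

Lemma info_hor x y e : (x < n)%nat -> (y < n)%nat -> In e (hor n x y) -> exists t, (t < n + y * n)%nat /\
  Oe e = false /\ Col e = (x + t)%nat /\ Row e = RR x y /\ good e.
Proof.
  intros Hx Hy H. destruct (in_hor n Hn x y e H) as [t [Ht' ->]]. pose proof Htg.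
  assert (RR x y < Ht)%nat by (unfold D.RR; nia).
  assert (x + t + 1 < Ht)%nat by nia.
  destruct (hor_info (x + t) (RR x y)) as [h1 [h2 [h3 [h4 h5]]]]; try lia.
  exists t. repeat split; auto; simpl; lia.
Qed.

Lemma info_ver x y e : (x < n)%nat -> (y < n)%nat -> In e (ver n x y) -> exists t, (t < n + x * n)%nat /\
  Oe e = true /\ Col e = CC x y /\ Row e = (y + t)%nat /\ good e.
Proof.
  intros Hx Hy H. destruct (in_ver n Hn x y e H) as [t [Ht' ->]]. pose proof Htg.
  assert (CC x y < Ht)%nat by (unfold D.CC; nia).
  assert (y + t + 1 < Ht)%nat by nia.
  destruct (vert_info (CC x y) (y + t)) as [h1 [h2 [h3 [h4 h5]]]]; try lia.
  exists t. repeat split; auto; simpl; lia.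
Qed.

Lemma good_all e : In e (allE n) -> good e.
Proof.
  intros H. destruct (in_allE n Hn e H) as [h|[h|[x [y [[Hx Hy] [h|h]]]]]].
  - destruct (info_spA e h) as [? [? [? [? [? [? ?]]]]]]; auto.
  - destruct (info_spB e h) as [? [? [? [? [? [? ?]]]]]]; auto.
  - destruct (info_hor x y e Hx Hy h) as [? [? [? [? [? ?]]]]]; auto.
  - destruct (info_ver x y e Hx Hy h) as [? [? [? [? [? ?]]]]]; auto.
Qed.

Lemma RR_inj x y x' y' : (y < n)%nat -> (y' < n)%nat -> RR x y = RR x' y' -> x = x' /\ y = y'.
Proof.
  intros H1 H2 E. unfold D.RR in E.
  destruct (divmod_n n Hn x y H1) as [a1 b1]. destruct (divmod_n n Hn x' y' H2) as [a2 b2].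
  assert (E' : (x * n + y = x' * n + y')%nat) by lia. rewrite E' in a1, b1. split; congruence.
Qed.

Lemma CC_inj x y x' y' : (x < n)%nat -> (x' < n)%nat -> CC x y = CC x' y' -> x = x' /\ y = y'.
Proof.
  intros H1 H2 E. unfold D.CC in E.
  destruct (divmod_n n Hn y x H1) as [a1 b1]. destruct (divmod_n n Hn y' x' H2) as [a2 b2].
  assert (E' : (y * n + x = y' * n + x')%nat) by lia. rewrite E' in a1, b1. split; congruence.
Qed.

Lemma in_own p e : In e (own n p) -> In e (hor n (fst p) (snd p)) \/ In e (ver n (fst p) (snd p)).
Proof. unfold own. apply in_app_or. Qed.

Lemma NoDup_pairs : NoDup (pairs n).
Proof.
  unfold pairs. apply NoDup_flat_map'.
  - apply seq_NoDup.
  - intros x _. apply NoDup_map_seq. intros t1 t2 _ _ E. injection E; auto.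
  - intros a b e _ _ Hab H1 H2. apply in_map_iff in H1, H2.
    destruct H1 as [y1 [<- _]]. destruct H2 as [y2 [E _]]. injection E; auto.
Qed.

Lemma NoDup_allE : NoDup (allE n).
Proof.
  pose proof Htg.
  unfold allE. apply NoDup_app; [|apply NoDup_app|].
  - unfold spA. apply NoDup_flat_map'.
    + apply seq_NoDup.
    + intros x Hx. apply NoDup_map_seq. intros t1 t2 _ _ E. injection E as E1 E2.
      unfold D.enc in E1. assert (RR x t1 = RR x t2) by lia. unfold D.RR in *. lia.
    + intros a b e Ha Hb Hab H1 H2.
      assert (Hi1 : In e (spA n)) by (unfold spA; apply in_flat_map; eauto).
      apply in_map_iff in H1, H2. destruct H1 as [y1 [E1 Hy1]]. destruct H2 as [y2 [E2 Hy2]].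
      apply in_seq in Ha, Hb, Hy1, Hy2.
      assert (Col e = a). { rewrite <- E1. unfold Col. simpl. rewrite (enc_div n Hn); auto. unfold D.RR. nia. }
      assert (Col e = b). { rewrite <- E2. unfold Col. simpl. rewrite (enc_div n Hn); auto. unfold D.RR. nia. }
      lia.
  - unfold spB. apply NoDup_flat_map'.
    + apply seq_NoDup.
    + intros y Hy. apply in_seq in Hy. apply NoDup_map_seq. intros t1 t2 _ _ E. injection E as E1 E2.
      unfold D.enc in E1. assert (CC t1 y = CC t2 y) by nia. unfold D.CC in *. lia.
    + intros a b e Ha Hb Hab H1 H2.
      apply in_map_iff in H1, H2. destruct H1 as [y1 [E1 Hy1]]. destruct H2 as [y2 [E2 Hy2]].
      apply in_seq in Ha, Hb, Hy1, Hy2.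
      assert (Row e = a). { rewrite <- E1. unfold Row. simpl. rewrite (enc_mod n Hn); auto. lia. }
      assert (Row e = b). { rewrite <- E2. unfold Row. simpl. rewrite (enc_mod n Hn); auto. lia. }
      lia.
  - apply NoDup_flat_map'.
    + apply NoDup_pairs.
    + intros [x y] Hp. apply (in_pairs n Hn) in Hp. simpl in Hp. destruct Hp as [Hx Hy].
      unfold own. simpl. apply NoDup_app.
      * unfold hor. apply NoDup_map_seq. intros t1 t2 _ _ E. injection E as E1 E2.
        unfold D.enc in E1. nia.
      * unfold ver. apply NoDup_map_seq. intros t1 t2 _ _ E. injection E as E1 E2.
        unfold D.enc in E1. lia.
      * intros e h1 h2. destruct (info_hor x y e Hx Hy h1) as [? [? [o1 _]]].
        destruct (info_ver x y e Hx Hy h2) as [? [? [o2 _]]]. congruence.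
    + intros [x y] [x' y'] e Hp Hp' Hne h1 h2. apply (in_pairs n Hn) in Hp, Hp'. simpl in *.
      destruct Hp as [Hx Hy]. destruct Hp' as [Hx' Hy'].
      apply in_own in h1, h2. simpl in *.
      destruct h1 as [h1|h1], h2 as [h2|h2].
      * destruct (info_hor x y e Hx Hy h1) as [? [? [_ [_ [r1 _]]]]].
        destruct (info_hor x' y' e Hx' Hy' h2) as [? [? [_ [_ [r2 _]]]]].
        rewrite r1 in r2. apply RR_inj in r2; auto. destruct r2; subst; auto.
      * destruct (info_hor x y e Hx Hy h1) as [? [? [o1 _]]].
        destruct (info_ver x' y' e Hx' Hy' h2) as [? [? [o2 _]]]. congruence.
      * destruct (info_ver x y e Hx Hy h1) as [? [? [o1 _]]].
        destruct (info_hor x' y' e Hx' Hy' h2) as [? [? [o2 _]]]. congruence.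
      * destruct (info_ver x y e Hx Hy h1) as [? [? [_ [r1 _]]]].
        destruct (info_ver x' y' e Hx' Hy' h2) as [? [? [_ [r2 _]]]].
        rewrite r1 in r2. apply CC_inj in r2; auto. destruct r2; subst; auto.
  - intros e h1 h2. destruct (info_spB e h1) as [x [y [Hxy [o1 [c1 [r1 _]]]]]].
    apply in_flat_map in h2. destruct h2 as [[x' y'] [Hp h2]]. apply (in_pairs n Hn) in Hp. simpl in Hp.
    apply in_own in h2. simpl in h2. destruct h2 as [h2|h2].
    + destruct (info_hor x' y' e ltac:(lia) ltac:(lia) h2) as [? [? [_ [_ [r2 _]]]]].
      unfold D.RR in r2. lia.
    + destruct (info_ver x' y' e ltac:(lia) ltac:(lia) h2) as [? [? [o2 _]]]. congruence.
  - intros e h1 h2. apply in_app_or in h2. destruct (info_spA e h1) as [x [y [Hxy [o1 [c1 [r1 _]]]]]].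
    destruct h2 as [h2|h2].
    + destruct (info_spB e h2) as [? [? [? [o2 _]]]]. congruence.
    + apply in_flat_map in h2. destruct h2 as [[x' y'] [Hp h2]]. apply (in_pairs n Hn) in Hp. simpl in Hp.
      apply in_own in h2. simpl in h2. destruct h2 as [h2|h2].
      * destruct (info_hor x' y' e ltac:(lia) ltac:(lia) h2) as [? [? [o2 _]]]. congruence.
      * destruct (info_ver x' y' e ltac:(lia) ltac:(lia) h2) as [? [? [_ [c2 _]]]].
        unfold D.CC in c2. lia.
Qed.

Lemma wf_G : wf_network (G n).
Proof.
  split.
  - apply Forall_forall. intros e He. simpl in He. destruct (good_all e He) as [_ [h1 h2]].
    unfold edge_ok. simpl. repeat split; try lia. apply (cost_pos n Hn); auto.
  - simpl. rewrite (map_ext_in unord (fun e => e)).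
    + rewrite map_id. apply NoDup_allE.
    + intros e He. destruct (good_all e He) as [_ [h1 h2]]. unfold unord.
      destruct e as [u v]; simpl in *. f_equal; lia.
Qed.

Lemma planar_G : planar (G n).
Proof.
  pose proof Htg.
  apply (planar_grid (G n) Ht).
  - lia.
  - apply Forall_forall. intros e He. apply good_all; auto.
  - apply NoDup_allE.
  - auto.
Qed.
End Wf.

End D2.
Import D2.

Module E.
Import ListNotations.
Open Scope R_scope.
Open Scope bool_scope.

Section Cut.
Variable n : nat.
Hypothesis Hn : (3 <= n)%nat.

Notation Ht := (Ht n).
Notation enc := (enc n).
Notation RR := (RR n).
Notation CC := (CC n).
Notation mw := (mw n).

Definition aT (x : nat) : nat := enc x (RR x 0).
Definition bT (y : nat) : nat := enc (CC 0 y) y.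

Definition Sij (i j : nat) (t : nat) : bool :=
  if Nat.ltb t n then Nat.leb i t else if Nat.ltb t (n + n) then Nat.leb j (t - n) else false.

Definition WS (i j : nat) (u : nat) : bool :=
  Nat.leb (n + i * n) (u mod Ht) || Nat.leb (n + j * n) (u / Ht).

Definition T (i j : nat) : R :=
  lsum (map (fun p => if Bool.eqb (Nat.leb i (fst p)) (Nat.leb j (snd p)) then 0 else mw (fst p) (snd p)) (pairs n)).

Definition fW (W : nat -> bool) (e : nat * nat) : R :=
  if Bool.eqb (W (fst e)) (W (snd e)) then 0 else costf n e.

Lemma cut_cost_G W : cut_cost (G n) W = lsum (map (fW W) (allE n)).
Proof. reflexivity. Qed.

Lemma fW_nonneg W e : In e (allE n) -> 0 <= fW W e.
Proof. intros H. unfold fW. destruct (Bool.eqb _ _); [lra|]. apply Rlt_le, (cost_pos n Hn); auto. Qed.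

Lemma T_le_sum i j : T i j <= lsum (map (fun p => mw (fst p) (snd p)) (pairs n)).
Proof.
  unfold T. apply lsum_le. intros p _. destruct (Bool.eqb _ _); [apply Rlt_le, (mw_pos n Hn)|lra].
Qed.

Lemma T_lt_M i j : T i j < Mbig n.
Proof. pose proof (T_le_sum i j). unfold Mbig. lra. Qed.

Lemma WS_enc i j c r : (r < Ht)%nat -> WS i j (enc c r) = Nat.leb (n + i * n) r || Nat.leb (n + j * n) c.
Proof. intros H. unfold WS. rewrite (enc_div n Hn), (enc_mod n Hn); auto. Qed.

Lemma Ht_big : (n + n * n = Ht)%nat.
Proof. reflexivity. Qed.

Lemma RR_lt' x y : (x < n -> y < n -> RR x y < Ht)%nat.
Proof. intros. unfold D.RR, D.Ht. nia. Qed.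

Lemma leb_RR i x y : (y < n)%nat -> Nat.leb (n + i * n) (RR x y) = Nat.leb i x.
Proof.
  intros H. unfold D.RR. destruct (Nat.leb_spec i x), (Nat.leb_spec (n + i * n) (n + x * n + y)); auto; nia.
Qed.

Lemma leb_CC j x y : (x < n)%nat -> Nat.leb (n + j * n) (CC x y) = Nat.leb j y.
Proof.
  intros H. unfold D.CC. destruct (Nat.leb_spec j y), (Nat.leb_spec (n + j * n) (n + y * n + x)); auto; nia.
Qed.

Lemma leb_small a x : (x < n)%nat -> Nat.leb (n + a * n) x = false.
Proof. intros. apply Nat.leb_gt. lia. Qed.

Lemma spineA (W : nat -> bool) x : (x < n)%nat -> (forall e, In e (spA n) -> W (fst e) = W (snd e)) ->
  forall y, (y < n)%nat -> W (enc x (RR x y)) = W (aT x).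
Proof.
  intros Hx H. induction y; intros Hy; [reflexivity|].
  rewrite <- IHy by lia.
  assert (Hin : In (enc x (RR x y), enc x (RR x y + 1)) (spA n)).
  { unfold spA. apply in_flat_map. exists x. split; [apply in_seq; lia|].
    apply in_map_iff. exists y. split; auto. apply in_seq; lia. }
  specialize (H _ Hin). simpl in H. rewrite H. f_equal. f_equal. unfold D.RR. lia.
Qed.

Lemma spineB (W : nat -> bool) y : (y < n)%nat -> (forall e, In e (spB n) -> W (fst e) = W (snd e)) ->
  forall x, (x < n)%nat -> W (enc (CC x y) y) = W (bT y).
Proof.
  intros Hy H. induction x; intros Hx; [reflexivity|].
  rewrite <- IHx by lia.
  assert (Hin : In (enc (CC x y) y, enc (CC x y + 1) y) (spB n)).
  { unfold spB. apply in_flat_map. exists y. split; [apply in_seq; lia|].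
    apply in_map_iff. exists x. split; auto. apply in_seq; lia. }
  specialize (H _ Hin). simpl in H. rewrite H. f_equal. f_equal. unfold D.CC. lia.
Qed.

Lemma hor_in x y t : (t < n + y * n)%nat -> In (enc (x + t) (RR x y), enc (x + t + 1) (RR x y)) (hor n x y).
Proof. intros. unfold hor. apply in_map_iff. exists t. split; auto. apply in_seq; lia. Qed.

Lemma ver_in x y t : (t < n + x * n)%nat -> In (enc (CC x y) (y + t), enc (CC x y) (y + t + 1)) (ver n x y).
Proof. intros. unfold ver. apply in_map_iff. exists t. split; auto. apply in_seq; lia. Qed.

Lemma own_in_allE p e : In p (pairs n) -> In e (own n p) -> In e (allE n).
Proof. intros. unfold allE. apply in_or_app. right. apply in_or_app. right. apply in_flat_map. eauto. Qed.

Lemma lower_bound i j (W : nat -> bool) :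
  (forall x, (x < n)%nat -> W (aT x) = Nat.leb i x) ->
  (forall y, (y < n)%nat -> W (bT y) = Nat.leb j y) ->
  T i j <= cut_cost (G n) W.
Proof.
  intros HA HB. rewrite cut_cost_G.
  destruct (classic (exists e, In e (spA n ++ spB n) /\ W (fst e) <> W (snd e))) as [[e [He Hne]]|Hno].
  - assert (HeA : In e (allE n)) by (unfold allE; rewrite app_assoc; apply in_or_app; auto).
    pose proof (lsum_ge_in (fW W) (allE n) e (fW_nonneg W) HeA).
    assert (fW W e = Mbig n).
    { unfold fW. assert (Hc : costf n e = Mbig n).
      { apply in_app_or in He. destruct He; [apply cost_spA|apply cost_spB]; auto. }
      destruct (W (fst e)), (W (snd e)); try contradiction; simpl; auto. }
    pose proof (T_lt_M i j). lra.
  - assert (HsA : forall e, In e (spA n) -> W (fst e) = W (snd e)).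
    { intros e He. destruct (Bool.bool_dec (W (fst e)) (W (snd e))); auto. exfalso. apply Hno.
      exists e. split; auto. apply in_or_app; auto. }
    assert (HsB : forall e, In e (spB n) -> W (fst e) = W (snd e)).
    { intros e He. destruct (Bool.bool_dec (W (fst e)) (W (snd e))); auto. exfalso. apply Hno.
      exists e. split; auto. apply in_or_app; auto. }
    unfold allE. rewrite !lsum_map_app.
    pose proof (lsum_nonneg (fW W) (spA n) ltac:(intros; apply fW_nonneg; unfold allE; apply in_or_app; auto)).
    pose proof (lsum_nonneg (fW W) (spB n) ltac:(intros; apply fW_nonneg; unfold allE; apply in_or_app; right; apply in_or_app; auto)).
    enough (T i j <= lsum (map (fW W) (flat_map (own n) (pairs n)))) by lra.
    rewrite lsum_flat_map. unfold T. apply lsum_le.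
    intros [x y] Hp. pose proof Hp as Hp'. apply (in_pairs n Hn) in Hp'. simpl in Hp'. destruct Hp' as [Hx Hy]. simpl fst; simpl snd.
    assert (Hnn : forall e, In e (own n (x, y)) -> 0 <= fW W e).
    { intros e He. apply fW_nonneg. eapply own_in_allE; eauto. }
    destruct (Bool.eqb (Nat.leb i x) (Nat.leb j y)) eqn:Eb.
    + apply lsum_nonneg; auto.
    + set (gH := fun t => enc (x + t) (RR x y)).
      set (gV := fun t => enc (CC x y) (y + t)).
      assert (E1 : W (gH 0%nat) = Nat.leb i x).
      { unfold gH. rewrite Nat.add_0_r. rewrite (spineA W x Hx HsA y Hy). auto. }
      assert (E2 : W (gV 0%nat) = Nat.leb j y).
      { unfold gV. rewrite Nat.add_0_r. rewrite (spineB W y Hy HsB x Hx). auto. }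
      assert (E3 : gH (n + y * n)%nat = gV (n + x * n)%nat).
      { unfold gH, gV. f_equal; unfold D.RR, D.CC; lia. }
      assert (Hne : Nat.leb i x <> Nat.leb j y) by (intros E; rewrite E in Eb; destruct (Nat.leb j y); discriminate).
      destruct (Bool.bool_dec (W (gH 0%nat)) (W (gH (n + y * n)%nat))) as [Hsame|Hdiff].
      * assert (Hd : W (gV 0%nat) <> W (gV (n + x * n)%nat)) by (rewrite <- E3, <- Hsame; congruence).
        destruct (switch_exists (fun t => W (gV t)) _ Hd) as [t [Ht Hsw]].
        set (e := (enc (CC x y) (y + t), enc (CC x y) (y + t + 1))).
        assert (He : In e (ver n x y)) by (apply ver_in; auto).
        assert (Hf : fW W e = mw x y).
        { unfold fW, e. simpl fst; simpl snd. unfold gV in Hsw.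
          replace (y + S t)%nat with (y + t + 1)%nat in Hsw by lia.
          destruct (W (enc (CC x y) (y + t))), (W (enc (CC x y) (y + t + 1))); try contradiction; simpl;
          apply (cost_ver n Hn x y); auto. }
        rewrite <- Hf. apply lsum_ge_in; auto. unfold own. simpl. apply in_or_app; auto.
      * destruct (switch_exists (fun t => W (gH t)) _ Hdiff) as [t [Ht Hsw]].
        set (e := (enc (x + t) (RR x y), enc (x + t + 1) (RR x y))).
        assert (He : In e (hor n x y)) by (apply hor_in; auto).
        assert (Hf : fW W e = mw x y).
        { unfold fW, e. simpl fst; simpl snd. unfold gH in Hsw.
          replace (x + S t)%nat with (x + t + 1)%nat in Hsw by lia.
          destruct (W (enc (x + t) (RR x y))), (W (enc (x + t + 1) (RR x y))); try contradiction; simpl;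
          apply (cost_hor n Hn x y); auto. }
        rewrite <- Hf. apply lsum_ge_in; auto. unfold own. simpl. apply in_or_app; auto.
Qed.

Lemma fW_spine_WS i j e : In e (spA n ++ spB n) -> fW (WS i j) e = 0.
Proof.
  intros He. unfold fW. apply in_app_or in He. destruct He as [He|He].
  - destruct (in_spA n Hn e He) as [x [y [[Hx Hy] ->]]]. simpl fst; simpl snd.
    assert (RR x y + 1 < Ht)%nat by (unfold D.RR, D.Ht; nia).
    rewrite !WS_enc by lia. rewrite (leb_small j x Hx).
    replace (Nat.leb (n + i * n) (RR x y + 1)) with (Nat.leb (n + i * n) (RR x y)).
    + destruct (Nat.leb _ _); reflexivity.
    + unfold D.RR. destruct (Nat.leb_spec (n + i * n) (n + x * n + y)), (Nat.leb_spec (n + i * n) (n + x * n + y + 1)); auto.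
      all: exfalso; try lia; destruct (le_lt_dec i x); nia.
  - destruct (in_spB n Hn e He) as [x [y [[Hy Hx] ->]]]. simpl fst; simpl snd.
    rewrite !WS_enc by (unfold D.Ht; nia).
    rewrite (leb_small i y) by lia.
    replace (Nat.leb (n + j * n) (CC x y + 1)) with (Nat.leb (n + j * n) (CC x y)).
    + destruct (Nat.leb _ _); reflexivity.
    + unfold D.CC. destruct (Nat.leb_spec (n + j * n) (n + y * n + x)), (Nat.leb_spec (n + j * n) (n + y * n + x + 1)); auto.
      all: exfalso; try lia; destruct (le_lt_dec j y); nia.
Qed.

Lemma own_WS i j x y : (x < n)%nat -> (y < n)%nat ->
  lsum (map (fW (WS i j)) (own n (x, y))) =
  if Bool.eqb (Nat.leb i x) (Nat.leb j y) then 0 else mw x y.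
Proof.
  intros Hx Hy. unfold own. simpl fst; simpl snd. rewrite lsum_map_app.
  assert (HR : (RR x y < Ht)%nat) by (apply RR_lt'; auto).
  assert (HC : (CC x y < Ht)%nat) by (unfold D.CC, D.Ht; nia).
  set (bH := fun t => WS i j (enc (x + t) (RR x y))).
  set (bV := fun t => WS i j (enc (CC x y) (y + t))).
  assert (H1 : lsum (map (fW (WS i j)) (hor n x y)) =
     lsum (map (fun t => if Bool.eqb (bH t) (bH (S t)) then 0 else mw x y) (seq 0 (n + y * n)))).
  { unfold hor. rewrite map_map. apply lsum_ext. intros t Ht'. apply in_seq in Ht'.
    unfold fW, bH. simpl fst; simpl snd. replace (x + S t)%nat with (x + t + 1)%nat by lia.
    rewrite (cost_hor n Hn x y); auto. apply hor_in; lia. }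
  assert (H2 : lsum (map (fW (WS i j)) (ver n x y)) =
     lsum (map (fun t => if Bool.eqb (bV t) (bV (S t)) then 0 else mw x y) (seq 0 (n + x * n)))).
  { unfold ver. rewrite map_map. apply lsum_ext. intros t Ht'. apply in_seq in Ht'.
    unfold fW, bV. simpl fst; simpl snd. replace (y + S t)%nat with (y + t + 1)%nat by lia.
    rewrite (cost_ver n Hn x y); auto. apply ver_in; lia. }
  rewrite H1, H2, !lsum_switch.
  - unfold bH, bV. rewrite !Nat.add_0_r.
    replace (x + (n + y * n))%nat with (CC x y) by (unfold D.CC; lia).
    replace (y + (n + x * n))%nat with (RR x y) by (unfold D.RR; lia).
    rewrite !WS_enc by lia.
    assert (y < Ht)%nat by (unfold D.Ht; nia).
    rewrite !WS_enc by lia.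
    rewrite (leb_RR i x y Hy), (leb_small j x Hx), (leb_small i y Hy), (leb_CC j x y Hx).
    destruct (Nat.leb i x), (Nat.leb j y); simpl; lra.
  - intros t Ht' Hb. unfold bV in *. rewrite WS_enc in * by (unfold D.Ht; nia).
    apply Bool.orb_true_iff in Hb. apply Bool.orb_true_iff. destruct Hb as [Hb|Hb]; [left|right; auto].
    apply Nat.leb_le in Hb. apply Nat.leb_le. lia.
  - intros t Ht' Hb. unfold bH in *. rewrite WS_enc in * by lia.
    apply Bool.orb_true_iff in Hb. apply Bool.orb_true_iff. destruct Hb as [Hb|Hb]; [left; auto|right].
    apply Nat.leb_le in Hb. apply Nat.leb_le. lia.
Qed.

Lemma upper i j : cut_cost (G n) (WS i j) = T i j.
Proof.
  rewrite cut_cost_G. unfold allE. rewrite !lsum_map_app.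
  rewrite (lsum_ext _ (fun _ => 0) (spA n)) by (intros; apply fW_spine_WS; apply in_or_app; auto).
  rewrite (lsum_ext _ (fun _ => 0) (spB n)) by (intros; apply fW_spine_WS; apply in_or_app; auto).
  rewrite lsum_flat_map. unfold T.
  rewrite (lsum_ext _ (fun p => if Bool.eqb (Nat.leb i (fst p)) (Nat.leb j (snd p)) then 0 else mw (fst p) (snd p)) (pairs n)).
  - assert (Z0 : forall l : list (nat * nat), lsum (map (fun _ => 0) l) = 0).
    { induction l; [reflexivity|]. unfold lsum in *. simpl. rewrite IHl. lra. }
    rewrite !Z0. lra.
  - intros [x y] Hp. apply (in_pairs n Hn) in Hp. simpl in Hp. apply own_WS; tauto.
Qed.
End Cut.

End E.
Import E.

Module E2.
Import ListNotations.
Open Scope R_scope.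
Open Scope bool_scope.

Lemma cut_cost_neg N W : cut_cost N (fun u => negb (W u)) = cut_cost N W.
Proof.
  unfold cut_cost. f_equal. apply map_ext. intros e.
  destruct (W (fst e)), (W (snd e)); reflexivity.
Qed.

Section Term.
Variable n : nat.
Hypothesis Hn : (3 <= n)%nat.
Variable b : bool.

Definition Qlist : list nat :=
  map (aT n) (seq 0 n) ++ map (bT n) (seq 0 n) ++ (if b then [0%nat] else []).

Lemma Qlen : length Qlist = (n + n + (if b then 1 else 0))%nat.
Proof. unfold Qlist. rewrite !length_app, !length_map, !length_seq. destruct b; simpl; lia. Qed.

Lemma Q_a t : (t < n)%nat -> nth t Qlist 0%nat = aT n t.
Proof.
  intros H. unfold Qlist. rewrite app_nth1 by (rewrite length_map, length_seq; lia).
  rewrite (nth_indep _ 0%nat (aT n 0)) by (rewrite length_map, length_seq; lia).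
  rewrite map_nth, seq_nth by lia. reflexivity.
Qed.

Lemma Q_b t : (n <= t < n + n)%nat -> nth t Qlist 0%nat = bT n (t - n).
Proof.
  intros H. unfold Qlist. rewrite app_nth2 by (rewrite length_map, length_seq; lia).
  rewrite length_map, length_seq.
  rewrite app_nth1 by (rewrite length_map, length_seq; lia).
  rewrite (nth_indep _ 0%nat (bT n 0)) by (rewrite length_map, length_seq; lia).
  rewrite map_nth, seq_nth by lia. reflexivity.
Qed.

Lemma Q_z t : b = true -> t = (n + n)%nat -> nth t Qlist 0%nat = 0%nat.
Proof.
  intros Hb ->. unfold Qlist. rewrite Hb.
  rewrite app_nth2 by (rewrite length_map, length_seq; lia).
  rewrite length_map, length_seq.
  rewrite app_nth2 by (rewrite length_map, length_seq; lia).
  rewrite length_map, length_seq. replace (n + n - n - n)%nat with 0%nat by lia. reflexivity.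
Qed.

Lemma Q_cases t : (t < length Qlist)%nat ->
  (t < n /\ nth t Qlist 0%nat = aT n t)%nat \/
  (n <= t < n + n /\ nth t Qlist 0%nat = bT n (t - n))%nat \/
  (b = true /\ t = n + n /\ nth t Qlist 0%nat = 0)%nat.
Proof.
  rewrite Qlen. intros H.
  destruct (lt_dec t n). { left. split; auto. apply Q_a; auto. }
  destruct (lt_dec t (n + n)). { right; left. split; [lia|]. apply Q_b; lia. }
  right; right. destruct b eqn:Eb; [|lia]. repeat split; auto; try lia. apply Q_z; auto; lia.
Qed.

Lemma aT_info x : (x < n)%nat -> (aT n x / Ht n = x /\ aT n x mod Ht n = RR n x 0 /\ n <= RR n x 0)%nat.
Proof.
  intros H. assert (RR n x 0 < Ht n)%nat by (unfold D.RR, D.Ht; nia).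
  unfold aT. rewrite (enc_div n Hn), (enc_mod n Hn) by lia. unfold D.RR. lia.
Qed.

Lemma bT_info y : (y < n)%nat -> (bT n y / Ht n = CC n 0 y /\ bT n y mod Ht n = y /\ n <= CC n 0 y)%nat.
Proof.
  intros H. assert (y < Ht n)%nat by (unfold D.Ht; nia).
  unfold bT. rewrite (enc_div n Hn), (enc_mod n Hn) by lia. unfold D.CC. lia.
Qed.

Lemma terminals : terminals_ok (G n) Qlist (length Qlist).
Proof.
  split; [reflexivity|split].
  - apply NoDup_nth with (d := 0%nat). intros t1 t2 H1 H2 E.
    destruct (Q_cases t1 H1) as [[h1 e1]|[[h1 e1]|[hb [h1 e1]]]];
    destruct (Q_cases t2 H2) as [[h2 e2]|[[h2 e2]|[hb' [h2 e2]]]]; rewrite e1, e2 in E; try lia.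
    + destruct (aT_info t1 h1) as [a1 _]. destruct (aT_info t2 h2) as [a2 _]. congruence.
    + destruct (aT_info t1 h1) as [_ [a1 a1']]. destruct (bT_info (t2 - n) ltac:(lia)) as [_ [a2 _]].
      rewrite E in a1. lia.
    + destruct (aT_info t1 h1) as [_ [a1 a1']]. rewrite E in a1. rewrite Nat.Div0.mod_0_l in a1. lia.
    + destruct (aT_info t2 h2) as [_ [a1 a1']]. destruct (bT_info (t1 - n) ltac:(lia)) as [_ [a2 _]].
      rewrite E in a2. lia.
    + destruct (bT_info (t1 - n) ltac:(lia)) as [_ [a1 _]]. destruct (bT_info (t2 - n) ltac:(lia)) as [_ [a2 _]].
      rewrite E in a1. lia.
    + destruct (bT_info (t1 - n) ltac:(lia)) as [a1 [_ a1']]. rewrite E in a1. rewrite Nat.Div0.div_0_l in a1. lia.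
    + destruct (aT_info t2 h2) as [_ [a1 a1']]. rewrite <- E in a1. rewrite Nat.Div0.mod_0_l in a1. lia.
    + destruct (bT_info (t2 - n) ltac:(lia)) as [a1 [_ a1']]. rewrite <- E in a1. rewrite Nat.Div0.div_0_l in a1. lia.
  - apply Forall_forall. intros q Hq. apply (In_nth _ _ 0%nat) in Hq. destruct Hq as [t [Ht Eq]].
    rewrite <- Eq. simpl. pose proof (Htg n Hn).
    destruct (Q_cases t Ht) as [[h1 e1]|[[h1 e1]|[hb [h1 e1]]]]; rewrite e1.
    + unfold aT, D.enc, D.RR, D.Ht in *. nia.
    + unfold bT, D.enc, D.CC, D.Ht in *. nia.
    + nia.
Qed.

Lemma WS_terms i j t : (t < length Qlist)%nat -> WS n i j (nth t Qlist 0%nat) = Sij n i j t.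
Proof.
  intros H. unfold Sij.
  destruct (Q_cases t H) as [[h1 e1]|[[h1 e1]|[hb [h1 e1]]]]; rewrite e1.
  - replace (Nat.ltb t n) with true by (symmetry; apply Nat.ltb_lt; lia).
    unfold aT. rewrite (WS_enc n Hn) by (unfold D.RR, D.Ht; nia).
    rewrite (leb_RR n Hn i t 0), (leb_small n Hn j t) by lia. apply Bool.orb_false_r.
  - replace (Nat.ltb t n) with false by (symmetry; apply Nat.ltb_ge; lia).
    replace (Nat.ltb t (n + n)) with true by (symmetry; apply Nat.ltb_lt; lia).
    unfold bT. rewrite (WS_enc n Hn) by (unfold D.Ht; nia).
    rewrite (leb_small n Hn i (t - n)), (leb_CC n Hn j 0 (t - n)) by lia. reflexivity.
  - replace (Nat.ltb t n) with false by (symmetry; apply Nat.ltb_ge; lia).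
    replace (Nat.ltb t (n + n)) with false by (symmetry; apply Nat.ltb_ge; lia).
    unfold WS. rewrite Nat.Div0.mod_0_l, Nat.Div0.div_0_l. 
    rewrite !(proj2 (Nat.leb_gt _ _)) by lia. reflexivity.
Qed.

Lemma mincut_G i j : is_mincut (G n) Qlist (Sij n i j) (T n i j).
Proof.
  split.
  - exists (WS n i j). split.
    + left. intros t Ht. apply WS_terms; auto.
    + apply (upper n Hn).
  - intros W Hsep.
    assert (Hgen : forall W', (forall t, (t < length Qlist)%nat -> W' (nth t Qlist 0%nat) = Sij n i j t) ->
               T n i j <= cut_cost (G n) W').
    { intros W' HW. apply (lower_bound n Hn).
      - intros x Hx. rewrite <- (Q_a x Hx), HW by (rewrite Qlen; lia). unfold Sij.
        replace (Nat.ltb x n) with true by (symmetry; apply Nat.ltb_lt; lia). reflexivity.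
      - intros y Hy. replace y with (n + y - n)%nat at 1 by lia.
        rewrite <- (Q_b (n + y)) by lia. rewrite HW by (rewrite Qlen; lia). unfold Sij.
        replace (Nat.ltb (n + y) n) with false by (symmetry; apply Nat.ltb_ge; lia).
        replace (Nat.ltb (n + y) (n + n)) with true by (symmetry; apply Nat.ltb_lt; lia).
        f_equal. lia. }
    destruct Hsep as [Hs|Hs].
    + apply Hgen. auto.
    + rewrite <- cut_cost_neg. apply Hgen. intros t Ht. rewrite Hs by auto. apply Bool.negb_involutive.
Qed.
End Term.

End E2.
Import E2.

Module F.
Import ListNotations.
Open Scope R_scope.

Lemma lsum_ind L j c : (j < L)%nat -> lsum (map (fun y => if Nat.eqb y j then c else 0) (seq 0 L)) = c.
Proof.
  induction L; intros H; [lia|]. rewrite seq_S, lsum_map_app. unfold lsum at 2. simpl.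
  destruct (Nat.eq_dec j L).
  - subst. rewrite Nat.eqb_refl.
    rewrite (lsum_ext _ (fun _ => 0)).
    + assert (Z0 : forall l : list nat, lsum (map (fun _ => 0) l) = 0).
      { induction l; [reflexivity|]. unfold lsum in *. simpl. rewrite IHl. lra. }
      rewrite Z0. lra.
    + intros y Hy. apply in_seq in Hy. destruct (Nat.eqb_spec y L); [lia|auto].
  - rewrite IHL by lia. destruct (Nat.eqb_spec L j); [lia|]. lra.
Qed.

Section Diff.
Variable n : nat.
Hypothesis Hn : (3 <= n)%nat.

Lemma Tdiff i j : (i < n)%nat -> (j < n)%nat ->
  T n i j - T n (S i) j - T n i (S j) + T n (S i) (S j) = -2 * mw n i j.
Proof.
  intros Hi Hj. unfold T.
  set (F := fun a c (p : nat * nat) => if Bool.eqb (Nat.leb a (fst p)) (Nat.leb c (snd p)) then 0 else mw n (fst p) (snd p)).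
  change (lsum (map (F i j) (pairs n)) - lsum (map (F (S i) j) (pairs n)) - lsum (map (F i (S j)) (pairs n)) +
          lsum (map (F (S i) (S j)) (pairs n)) = -2 * mw n i j).
  replace (lsum (map (F i j) (pairs n)) - lsum (map (F (S i) j) (pairs n)) - lsum (map (F i (S j)) (pairs n)) +
          lsum (map (F (S i) (S j)) (pairs n)))
    with (lsum (map (fun p => F i j p + (-1) * F (S i) j p + ((-1) * F i (S j) p + F (S i) (S j) p)) (pairs n)))
    by (rewrite !lsum_plus, !lsum_scal; ring).
  rewrite (lsum_ext _ (fun p => if Nat.eqb (fst p) i then (if Nat.eqb (snd p) j then -2 * mw n i j else 0) else 0)).
  - unfold pairs. rewrite lsum_flat_map.
    rewrite (lsum_ext _ (fun x => if Nat.eqb x i then -2 * mw n i j else 0)).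
    + apply lsum_ind; auto.
    + intros x _. rewrite map_map. simpl fst; simpl snd. destruct (Nat.eqb x i).
      * apply lsum_ind; auto.
      * assert (Z0 : forall l : list nat, lsum (map (fun _ => 0) l) = 0).
        { induction l; [reflexivity|]. unfold lsum in *. simpl. rewrite IHl. lra. }
        apply Z0.
  - intros [x y] _. unfold F. simpl fst; simpl snd.
    destruct (Nat.leb_spec i x), (Nat.leb_spec (S i) x), (Nat.leb_spec j y), (Nat.leb_spec (S j) y);
    simpl; destruct (Nat.eqb_spec x i), (Nat.eqb_spec y j); try lia; subst; try lra.
Qed.
End Diff.

Lemma cut_as_rs N W : cut_cost N W =
  rs (length (edges N)) (fun e => IZR (if Bool.eqb (W (fst (nth e (edges N) (0%nat,0%nat)))) (W (snd (nth e (edges N) (0%nat,0%nat)))) then 0%Z else 1%Z)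
                               * cost N (nth e (edges N) (0%nat,0%nat))).
Proof.
  unfold cut_cost. change (fold_right Rplus 0) with lsum. rewrite (lsum_nth _ _ (0%nat,0%nat)).
  apply rs_ext. intros e _. destruct (Bool.eqb _ _); simpl; ring.
Qed.

Theorem main_thm :
  exists beta : R, 0 < beta /\
    forall k : nat, (5 < k)%nat ->
      exists (G : network) (Q : list nat),
        wf_network G /\ terminals_ok G Q k /\ planar G /\
        forall G' : network, mimicking G' G Q ->
          beta * (INR k) ^ 2 <= INR (length (edges G')).
Proof.
  exists (1/100). split; [lra|].
  intros k Hk.
  set (n := (k / 2)%nat).
  set (b := Nat.eqb (k mod 2) 1).
  assert (Hkn : k = (n + n + (if b then 1 else 0))%nat).
  { unfold n, b. pose proof (Nat.div_mod k 2 ltac:(lia)). pose proof (Nat.mod_upper_bound k 2 ltac:(lia)).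
    destruct (Nat.eqb_spec (k mod 2) 1); lia. }
  assert (Hn : (3 <= n)%nat) by (destruct b; lia).
  exists (G n), (Qlist n b).
  assert (HQ : length (Qlist n b) = k) by (rewrite Qlen; lia).
  split; [apply (wf_G n Hn)|split; [rewrite <- HQ; apply (terminals n Hn b)|split; [apply (planar_G n Hn)|]]].
  intros G' [_ [_ Hmim]].
  rewrite HQ in Hmim.
  set (m := length (edges G')).
  set (cs := fun e => cost G' (nth e (edges G') (0%nat,0%nat))).
  set (bit := fun (W : nat -> bool) e => if Bool.eqb (W (fst (nth e (edges G') (0%nat,0%nat)))) (W (snd (nth e (edges G') (0%nat,0%nat)))) then 0%Z else 1%Z).
  assert (Hex : forall i j, exists W : nat -> bool, (1 <= i <= n - 1)%nat -> cut_cost G' W = T n i j).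
  { intros i j. destruct (le_dec 1 i); [destruct (le_dec i (n - 1))|].
    - assert (Hp : proper_subset k (Sij n i j)).
      { split.
        - exists (n - 1)%nat. split; [lia|]. unfold Sij.
          replace (Nat.ltb (n - 1) n) with true by (symmetry; apply Nat.ltb_lt; lia). apply Nat.leb_le. lia.
        - exists 0%nat. split; [lia|]. unfold Sij.
          replace (Nat.ltb 0 n) with true by (symmetry; apply Nat.ltb_lt; lia). apply Nat.leb_gt. lia. }
      destruct (proj1 (Hmim _ Hp (T n i j)) (mincut_G n Hn b i j)) as [[W [_ HW]] _].
      exists W. auto.
    - exists (fun _ => true). intros; lia.
    - exists (fun _ => true). intros; lia. }
  set (Wsel := fun i j => proj1_sig (constructive_indefinite_description _ (Hex i j))).
  assert (HWsel : forall i j, (1 <= i <= n - 1)%nat -> cut_cost G' (Wsel i j) = T n i j).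
  { intros i j. unfold Wsel. destruct (constructive_indefinite_description _ _). simpl. auto. }
  set (d := ((n - 2) * (n - 2))%nat).
  set (ii := fun t => (1 + t / (n - 2))%nat).
  set (jj := fun t => (t mod (n - 2))%nat).
  assert (Hij : forall t, (t < d)%nat -> (1 <= ii t <= n - 2 /\ jj t <= n - 3)%nat).
  { intros t Ht. unfold ii, jj, d in *. split.
    - split; [lia|]. assert (t / (n - 2) < n - 2)%nat by (apply Nat.Div0.div_lt_upper_bound; lia). lia.
    - pose proof (Nat.mod_upper_bound t (n - 2) ltac:(lia)). lia. }
  set (u := fun t => T n (ii t) (jj t) - T n (S (ii t)) (jj t) - T n (ii t) (S (jj t)) + T n (S (ii t)) (S (jj t))).
  set (A := fun t e => (bit (Wsel (ii t) (jj t)) e - bit (Wsel (S (ii t)) (jj t)) e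
                        - bit (Wsel (ii t) (S (jj t))) e + bit (Wsel (S (ii t)) (S (jj t))) e)%Z).
  assert (Hdm : (d <= m)%nat).
  { apply (LA m cs d u A).
    - intros t Ht. destruct (Hij t Ht) as [[h1 h2] h3].
      unfold u. rewrite <- !HWsel by lia. rewrite !cut_as_rs. fold m.
      rewrite (rs_ext m (fun e => IZR (A t e) * cs e)
        (fun e => (IZR (bit (Wsel (ii t) (jj t)) e) * cs e + (-1) * (IZR (bit (Wsel (S (ii t)) (jj t)) e) * cs e))
                 + ((-1) * (IZR (bit (Wsel (ii t) (S (jj t))) e) * cs e) + IZR (bit (Wsel (S (ii t)) (S (jj t))) e) * cs e))).
      + rewrite !rs_plus, !rs_scal. unfold bit, cs. ring.
      + intros e _. unfold A. rewrite plus_IZR, !minus_IZR. ring.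
    - intros lam Hl t Ht.
      set (q := fun t => P (ii t * n + jj t)).
      assert (Hu : forall t, (t < d)%nat -> u t = -2 * ln (IZR (q t))).
      { intros t' Ht'. destruct (Hij t' Ht') as [[h1 h2] h3]. unfold u. rewrite (Tdiff n Hn) by lia. reflexivity. }
      apply (indep_ln q (fun t => P_prime _) d).
      + intros t1 t2 H1 H2 E. unfold q in E. apply P_inj in E.
        destruct (Hij t1 H1) as [_ g1]. destruct (Hij t2 H2) as [_ g2].
        destruct (divmod_n n Hn (ii t1) (jj t1) ltac:(lia)) as [a1 b1].
        destruct (divmod_n n Hn (ii t2) (jj t2) ltac:(lia)) as [a2 b2].
        rewrite E in a1, b1. rewrite a1 in a2. rewrite b1 in b2.
        unfold ii, jj in a2, b2.
        rewrite (Nat.div_mod t1 (n - 2)), (Nat.div_mod t2 (n - 2)) by lia. lia.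
      + rewrite (rs_ext d (fun t => IZR (lam t) * ln (IZR (q t))) (fun t => (-1/2) * (IZR (lam t) * u t))).
        * rewrite rs_scal, Hl. ring.
        * intros t' Ht'. rewrite Hu by auto. field.
      + auto. }
  apply Rle_trans with (INR d).
  - assert (Hk1 : (k <= n + n + 1)%nat) by (destruct b; lia).
    assert (H1 : (k * k <= 100 * ((n - 2) * (n - 2)))%nat).
    { remember (n - 2)%nat as p. assert (k <= 2 * p + 5)%nat by lia. assert (1 <= p)%nat by lia.
      assert (k * k <= (2 * p + 5) * (2 * p + 5))%nat by (apply Nat.mul_le_mono; lia). nia. }
    apply le_INR in H1. rewrite !mult_INR in H1.
    replace (INR 100) with 100 in H1 by (rewrite INR_IZR_INZ; reflexivity).
    unfold d. rewrite mult_INR. simpl pow. lra.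
  - apply le_INR. auto.
Qed.

End F.
Import F.

Open Scope R_scope.
Theorem theorem1p3 :
  exists beta : R, 0 < beta /\
    forall k : nat, (5 < k)%nat ->
      exists (G : network) (Q : list nat),
        wf_network G /\ terminals_ok G Q k /\ planar G /\
        forall G' : network, mimicking G' G Q ->
          beta * (INR k) ^ 2 <= INR (length (edges G')).
Proof.
  exact main_thm.
Qed.
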